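(* For every integer $n\ge 2$, \[ \sum_{k=2}^{n}(-1)^{k}\genfrac{\{}{\}}{0pt}{}{n}{k}(k-1)!\,H_{k-1}H_{k}=\frac{n+1}{2}B_{n-2}. \]
   Context: $\genfrac{\{}{\}}{0pt}{}{n}{k}$ denotes the Stirling numbers of the second kind, $H_k=\sum_{i=1}^k 1/i$ the harmonic numbers, and $B_n$ the Bernoulli numbers, $\sum_{n\ge0}B_n t^n/n!=t/(e^t-1)$ (so $B_1=-1/2$). *)

(* Defs.v *)
From mathcomp Require Import all_boot all_order all_algebra.
Set Implicit Arguments. Unset Strict Implicit. Unset Printing Implicit Defensive.
Import Order.TTheory GRing.Theory Num.Theory.
Local Open Scope ring_scope.

Fixpoint stirling2 (n k : nat) : nat :=
  match n, k with
  | 0, 0 => 1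
  | 0, _.+1 => 0
  | _.+1, 0 => 0
  | n'.+1, k'.+1 => (k'.+1 * stirling2 n' k + stirling2 n' k')%N
  end.

Definition harmonic (k : nat) : rat := \sum_(1 <= i < k.+1) (i%:R)^-1.

(* Bernoulli numbers with t/(e^t-1) = sum B_n t^n/n!  (so B_1 = -1/2), via the
   equivalent standard recurrence sum_{k=0}^{m} C(m+1,k) B_k = 0 for m >= 1. *)
Fixpoint bern_list (n : nat) : seq rat :=
  match n with
  | 0 => [:: 1]
  | m.+1 =>
      let l := bern_list m in
      rcons l (- (m.+2%:R)^-1 * \sum_(k < m.+1) ('C(m.+2, k))%:R * nth 0 l k)
  end.

Definition bernoulli (n : nat) : rat := nth 0 (bern_list n) n.

(* Main.v *)
Require Import Defs.
From mathcomp Require Import all_boot all_order all_algebra.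
From mathcomp Require Import ring zify.
Import Order.TTheory GRing.Theory Num.Theory.
Local Open Scope ring_scope.

Definition Fw (w : nat -> rat) (p : {poly rat}) : rat :=
  \sum_(i < size p) p`_i * w i.

Lemma FwE w (p : {poly rat}) N : (size p <= N)%N -> Fw w p = \sum_(i < N) p`_i * w i.
Proof.
move=> hN; rewrite /Fw (big_ord_widen _ (fun i => p`_i * w i) hN) big_mkcond /=.
apply: eq_bigr => i _; case: ifP => // /negbT; rewrite -leqNgt => h.
by rewrite nth_default // mul0r.
Qed.

Lemma FwD w p q : Fw w (p + q) = Fw w p + Fw w q.
Proof.
set N := maxn (size p) (size q).
rewrite (@FwE w _ N (size_polyD p q)) (@FwE w _ N (leq_maxl _ _))
  (@FwE w _ N (leq_maxr _ _)) -big_split /=.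
by apply: eq_bigr => i _; rewrite coefD mulrDl.
Qed.

Lemma FwZ w c p : Fw w (c *: p) = c * Fw w p.
Proof.
rewrite (@FwE w _ (size p) (size_scale_leq _ _)) /Fw mulr_sumr.
by apply: eq_bigr => i _; rewrite coefZ mulrA.
Qed.

Lemma FwB w p q : Fw w (p - q) = Fw w p - Fw w q.
Proof. by rewrite FwD -scaleN1r FwZ mulN1r. Qed.

Lemma Fw_sum w n (F : nat -> {poly rat}) :
  Fw w (\sum_(k < n) F k) = \sum_(k < n) Fw w (F k).
Proof.
elim: n => [|n IH]; first by rewrite !big_ord0 /Fw size_poly0 big_ord0.
by rewrite !big_ord_recr /= FwD IH.
Qed.

Lemma size_bern m : size (bern_list m) = m.+1.
Proof. by elim: m => //= m IH; rewrite size_rcons IH. Qed.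

Lemma nth_bern m k : (k <= m)%N -> nth 0 (bern_list m) k = bernoulli k.
Proof.
elim: m k => [|m IH] k hk; first by case: k hk.
rewrite leq_eqVlt in hk; case/orP: hk => [/eqP -> //|hk].
by rewrite /= nth_rcons size_bern hk IH.
Qed.

Lemma bern_rec m :
  \sum_(k < m.+2) ('C(m.+2, k))%:R * bernoulli k = 0.
Proof.
rewrite big_ord_recr /=.
have -> : bernoulli m.+1 = - (m.+2%:R)^-1 *
   \sum_(k < m.+1) ('C(m.+2, k))%:R * bernoulli k.
  rewrite /bernoulli /= nth_rcons size_bern ltnn eqxx; congr (_ * _).
  by apply: eq_bigr => k _; rewrite nth_bern // -ltnS.
rewrite binSn.
have h : (m.+2%:R : rat) != 0 by rewrite pnatr_eq0.
set S := \sum_(_ < _) _. by rewrite mulrA mulrN mulfV // mulN1r subrr.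
Qed.

Lemma sum_coefE (F : nat -> rat) (p : {poly rat}) N : (size p <= N)%N ->
  \sum_(i < size p) p`_i * F i = \sum_(i < N) p`_i * F i.
Proof. exact: FwE. Qed.

Lemma bern_sum i : \sum_(j < i) ('C(i, j))%:R * bernoulli j = (i == 1%N)%:R.
Proof.
case: i => [|[|m]]; first by rewrite big_ord0.
  by rewrite big_ord1 bin0 mul1r.
by rewrite bern_rec.
Qed.

Lemma coefXadd1 i j : ((('X + 1) ^+ i : {poly rat})`_j) = ('C(i, j))%:R.
Proof.
elim: i j => [|i IH] j.
  by rewrite expr0 coefC; case: j.
rewrite exprS mulrDl mul1r coefD coefXM IH.
case: j => [|j] /=; first by rewrite add0r IH !bin0.
by rewrite IH binS natrD addrC.
Qed.

Definition Bf := Fw bernoulli.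
Definition Delta (p : {poly rat}) := p \Po ('X + 1) - p.

Lemma B_Delta p : Bf (Delta p) = p`_1.
Proof.
set N := (size p).+2.
have hs : (size (p \Po ('X + 1)) <= N)%N.
  apply: leq_trans (size_comp_poly_leq _ _) _.
  rewrite size_XaddC muln1 /N; lia.
have hp : (size p <= N)%N by rewrite /N leqW.
rewrite /Bf /Delta FwB (@FwE _ _ N hs) (@FwE _ _ N hp).
have -> : \sum_(j < N) (p \Po ('X + 1))`_j * bernoulli j =
          \sum_(i < N) p`_i * \sum_(j < N) ('C(i, j))%:R * bernoulli j.
  under eq_bigr => j _ do
    rewrite coef_comp_poly (@sum_coefE (fun i => (('X + 1) ^+ i)`_j) p N hp) mulr_suml.
  rewrite exchange_big /=; apply: eq_bigr => i _; rewrite mulr_sumr.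
  by apply: eq_bigr => j _; rewrite coefXadd1 mulrA.
rewrite -sumrB.
have -> : \sum_(i < N) (p`_i * (\sum_(j < N) ('C(i, j))%:R * bernoulli j) -
      p`_i * bernoulli i) = \sum_(i < N) p`_i * ((i : nat) == 1%N)%:R.
  apply: eq_bigr => i _; rewrite -mulrBr; congr (_ * _).
  have -> : \sum_(j < N) ('C(i, j))%:R * bernoulli j =
            \sum_(j < i.+1) ('C(i, j))%:R * bernoulli j.
    rewrite (big_ord_widen _ (fun j => ('C(i, j))%:R * bernoulli j) (ltn_ord i)).
    rewrite [RHS]big_mkcond /=; apply: eq_bigr => j _; case: ifP => // /negbT.
    by rewrite -leqNgt => h; rewrite bin_small // mul0r.
  by rewrite big_ord_recr /= binn mul1r addrK bern_sum.
rewrite /N !big_ord_recl /= big1 ?mulr1 ?mulr0 ?add0r ?addr0 //.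
by move=> i _; rewrite mulr0.
Qed.

Definition P r : {poly rat} := \prod_(i < r) ('X - (i.+1)%:R%:P).
Definition Q r : {poly rat} := \prod_(i < r) ('X - i%:R%:P).

Lemma Q_S r : Q r.+1 = 'X * P r.
Proof. by rewrite /Q big_ord_recl /= polyC0 subr0. Qed.

Lemma P_S r : P r.+1 = P r * ('X - (r.+1)%:R%:P).
Proof. by rewrite /P big_ord_recr. Qed.

Lemma Q_S' r : Q r.+1 = Q r * ('X - r%:R%:P).
Proof. by rewrite /Q big_ord_recr. Qed.

Lemma P_shift r : P r \Po ('X + 1) = Q r.
Proof.
rewrite /P /Q (rmorph_prod (comp_poly ('X + 1))) /=.
apply: eq_bigr => i _.
rewrite comp_polyB comp_polyX comp_polyC -natr1 polyCD polyC1.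
ring.
Qed.

Lemma Delta_P r : Delta (P r.+1) = (r.+1)%:R *: P r.
Proof.
rewrite /Delta P_shift Q_S P_S -mul_polyC.
ring.
Qed.

Definition h2 r : rat := \sum_(i < r) ((i.+1)%:R ^+ 2)^-1.

Lemma harmonic0 : harmonic 0 = 0.
Proof. by rewrite /harmonic big_geq. Qed.

Lemma harmonicS r : harmonic r.+1 = harmonic r + ((r.+1)%:R)^-1.
Proof. by rewrite /harmonic big_nat_recr. Qed.

Lemma h2S r : h2 r.+1 = h2 r + ((r.+1)%:R ^+ 2)^-1.
Proof. by rewrite /h2 big_ord_recr. Qed.

Lemma coefMXC0 (p : {poly rat}) c : (p * ('X - c%:P))`_0 = - (p`_0 * c).
Proof. by rewrite mulrBr coefB coefMX coefMC sub0r. Qed.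

Lemma coefMXCS (p : {poly rat}) c i :
  (p * ('X - c%:P))`_i.+1 = p`_i - p`_i.+1 * c.
Proof. by rewrite mulrBr coefB coefMX coefMC. Qed.

Lemma nz r : ((r.+1)%:R : rat) != 0.
Proof. by rewrite pnatr_eq0. Qed.

Lemma P0 : P 0 = 1.
Proof. by rewrite /P big_ord0. Qed.

Lemma cP0 r : (P r)`_0 = (-1) ^+ r * (r`!)%:R.
Proof.
elim: r => [|r IH]; first by rewrite P0 coefC.
rewrite P_S coefMXC0 IH factS natrM exprS; ring.
Qed.

Lemma cP1 r : (P r)`_1 = (-1) ^+ r.+1 * (r`!)%:R * harmonic r.
Proof.
elim: r => [|r IH]; first by rewrite P0 coefC harmonic0 mulr0.
rewrite P_S coefMXCS IH cP0 factS natrM harmonicS !exprS.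
have := nz r; set x := (r.+1)%:R => hx. field; by [exact: hx | rewrite addrC natr1 nz].
Qed.

Lemma cP2 r : (P r)`_2 = (-1) ^+ r * (r`!)%:R * (harmonic r ^+ 2 - h2 r) / 2.
Proof.
elim: r => [|r IH]; first by rewrite P0 coefC /h2 big_ord0 harmonic0; ring.
rewrite P_S coefMXCS IH cP1 factS natrM harmonicS h2S !exprS.
have := nz r; set x := (r.+1)%:R => hx. field; by [exact: hx | rewrite addrC natr1 nz].
Qed.

Lemma B_P r : Bf (P r) = (-1) ^+ r * (r`!)%:R * harmonic r.+1.
Proof.
have := B_Delta (P r.+1); rewrite Delta_P /Bf FwZ cP1 factS natrM => h.
apply: (mulfI (nz r)); rewrite h !exprS; ring.
Qed.

Lemma Delta_deriv R : Delta R^`() = (Delta R)^`().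
Proof.
by rewrite /Delta derivB deriv_comp derivD derivX -polyC1 derivC addr0 mulr1.
Qed.

Lemma B_dP r : Bf (P r)^`() =
  (-1) ^+ r.+1 * (r`!)%:R * (harmonic r.+1 ^+ 2 - h2 r.+1).
Proof.
have := B_Delta (P r.+1)^`().
rewrite Delta_deriv Delta_P derivZ /Bf FwZ coef_deriv cP2 factS natrM => h.
apply: (mulfI (nz r)); rewrite h !exprS -mulr_natr; by field.
Qed.

Definition wp (i : nat) : rat := if i is j.+1 then bernoulli j else 0.
Definition Bp := Fw wp.

Lemma Fw1 w : Fw w 1 = w 0%N.
Proof. by rewrite /Fw size_poly1 big_ord1 coefC mul1r. Qed.

Lemma Bp_MX p : Bp (p * 'X) = Bf p.
Proof.
have h1 : (size (p * 'X)%R <= (size p).+1)%N.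
  apply: leq_trans (size_polyMleq _ _) _; rewrite size_polyX; lia.
rewrite /Bp /Bf (@FwE _ _ _ h1) (@FwE _ p (size p) (leqnn _)) big_ord_recl.
rewrite coefMX /= mul0r add0r; apply: eq_bigr => i _.
by rewrite coefMX /bump leq0n /= add0n.
Qed.

Lemma Bp_P m : Bp (P m) = (-1) ^+ m.+1 * (m`!)%:R * (harmonic m ^+ 2 + h2 m) / 2.
Proof.
elim: m => [|m IH].
  rewrite P0 /Bp Fw1 /wp harmonic0 /h2 big_ord0; ring.
rewrite P_S mulrBr [_ * _%:P]mulrC mul_polyC /Bp FwB FwZ -/Bp Bp_MX B_P IH.
rewrite factS natrM harmonicS h2S !exprS.
have := nz m; set x := (m.+1)%:R => hx.
field; by [exact: hx | rewrite addrC natr1 nz].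
Qed.

Definition bb (i : nat) : rat :=
  if i is j.+2 then (j.+3)%:R / 2 * bernoulli j else 0.
Definition Phi := Fw bb.

Lemma size_deriv_le (g : {poly rat}) : (size g^`() <= size g)%N.
Proof.
have [->|hg] := eqVneq g 0; first by rewrite deriv0.
exact: ltnW (lt_size_deriv hg).
Qed.

Lemma Phi_X g : Phi ('X * g) = Bf g^`() / 2 + Bp g.
Proof.
set N := size g.
have h1 : (size ('X * g)%R <= N.+2)%N.
  apply: leq_trans (size_polyMleq _ _) _; rewrite size_polyX /N; lia.
have h3 : (size g <= N.+1)%N by rewrite /N leqW.
rewrite /Phi /Bf /Bp (@FwE _ _ _ h1) (@FwE _ _ _ (size_deriv_le g))
  (@FwE _ _ _ h3) !big_ord_recl /= !coefXM /=.
rewrite !mulr0 !add0r mulr_suml -big_split /=.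
apply: eq_bigr => i _.
rewrite coefXM coef_deriv /bump !leq0n /= !add0n !add1n.
rewrite -[_ *+ i.+1]mulr_natr -[i.+3]addn3 -[i.+1]addn1 !natrD; by field.
Qed.

Definition cval (k : nat) : rat :=
  (-1) ^+ k * ((k.-1)`!)%:R * harmonic k.-1 * harmonic k.

Lemma Phi_Q k : Phi (Q k) = cval k.
Proof.
case: k => [|m].
  by rewrite /Q big_ord0 /Phi Fw1 /cval harmonic0 !mulr0.
rewrite Q_S Phi_X B_dP Bp_P /cval /= harmonicS h2S !exprS.
have := nz m; set x := (m.+1)%:R => hx.
field; by [exact: hx | rewrite addrC natr1 nz].
Qed.

Lemma stirling_big n k : (n < k)%N -> stirling2 n k = 0%N.
Proof.
elim: n k => [|n IH] [|k] //= h.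
by rewrite !IH ?muln0 // ltnW.
Qed.

Lemma XQ k : 'X * Q k = Q k.+1 + k%:R *: Q k.
Proof. rewrite Q_S' -mul_polyC; ring. Qed.

Lemma XnE n N : (n < N)%N -> 'X^n = \sum_(k < N) (stirling2 n k)%:R *: Q k.
Proof.
elim: n N => [|n IH] N hN.
  case: N hN => // N _; rewrite big_ord_recl /= scale1r /Q big_ord0 expr0.
  by rewrite big1 ?addr0 // => i _; rewrite scale0r.
case: N hN => // N hN.
rewrite exprS (IH N.+1 (ltnW hN)) mulr_sumr.
under eq_bigr => k _ do rewrite -scalerAr XQ scalerDr.
rewrite big_split /= big_ord_recr /= (@stirling_big n N) // scale0r addr0.
rewrite [X in _ + X]big_ord_recl /= scale0r scaler0 add0r.
rewrite [X in _ = X]big_ord_recl /= scale0r add0r -big_split /=.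
apply: eq_bigr => i _; rewrite /bump leq0n /= !add1n !add0n natrD scalerDl.
by rewrite addrC scalerA -natrM mulnC.
Qed.

Lemma Phi_Xn n : Phi 'X^n = bb n.
Proof.
rewrite /Phi /Fw size_polyXn big_ord_recr /= coefXn eqxx mul1r big1 ?add0r //.
by move=> i _; rewrite coefXn (ltn_eqF (ltn_ord i)) mul0r.
Qed.

Theorem theorem5 (n : nat) (hn : (2 <= n)%N) :
  \sum_(2 <= k < n.+1)
     (-1) ^+ k * (stirling2 n k)%:R * ((k.-1)`!)%:R * harmonic k.-1 * harmonic k
  = (n.+1)%:R / 2%:R * bernoulli (n - 2).
Proof.
have E : \sum_(k < n.+1) (stirling2 n k)%:R * cval k = bb n.
  rewrite -Phi_Xn (@XnE n n.+1 (ltnSn n)) /Phi (Fw_sum bb n.+1 (fun k => (stirling2 n k)%:R *: Q k)).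
  by apply: eq_bigr => k _; rewrite FwZ -/Phi Phi_Q.
case: n hn E => [|[|j]] // _ E.
rewrite -(big_mkord xpredT (fun k => (stirling2 j.+2 k)%:R * cval k)) in E.
rewrite big_ltn // big_ltn // /cval /= harmonic0 !mulr0 !add0r in E.
rewrite mul0r mulr0 add0r in E.
rewrite /= subn2 /= -E; apply: eq_bigr => k _; ring.
Qed.
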